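(* Let $T$ be an argumentation theory, $G(T)$ its full grounding, and $G_{DL}(T)$ its grounding via the Datalog program $P_T$ of Transformation 1 (as in the context). Then for every semantics $\mathsf{sem}\in\{\text{complete},\text{grounded},\text{preferred},\text{stable}\}$, $$\mathsf{sem}(T)=\mathsf{sem}(G(T))=\mathsf{sem}(G_{DL}(T)),$$ where $\mathsf{sem}(G)$ denotes the set of $\mathsf{sem}$-extensions of the abstract argumentation framework $(\mathrm{Args}(G),\mathrm{Att}(G))$ and $\mathsf{sem}(T)$ is defined as $\mathsf{sem}(G(T))$.
   Context: Work over a function-free first-order signature (predicates and constants); atoms are $p(t_1,\dots,t_k)$ with each $t_i$ a constant or variable. An argumentation theory is $T=(K_n,K_p,R_s,R_d,C,\mathsf{n})$ where: $K_n$ (axioms) and $K_p$ (ordinary premises) are finite sets of ground atoms; $R_s$ (strict rules) is a finite set of rules $b_1(\vec X_1),\dots,b_m(\vec X_m)\to h(\vec Y)$ and $R_d$ (defeasible rules) a finite set of rules $b_1(\vec X_1),\dots,b_m(\vec X_m)\Rightarrow h(\vec Y)$, where every variable of the head occurs in the body; each $r\in R_d$ carries a name atom $\mathsf{n}(r)=\nu_r(\vec Z)$ whose variables occur in the body of $r$; $C$ is a finite set of contrariness rules $c: s(\vec X)\rightsquigarrow S(\vec X)$, where $s(\vec X)$ is an atom and $S(\vec X)$ a finite set of atoms whose variables occur in $\vec X$. The Herbrand universe $HU(T)$ is the set of constants occurring in $T$; a ground substitution maps variables to $HU(T)$, and for a rule or contrariness rule $x$ and ground substitution $\sigma$, $x\sigma$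 is its ground instance (with $\mathsf{n}(r\sigma)=\mathsf{n}(r)\sigma$). The full grounding $G(T)$ has the same $K_n,K_p$, and as rules and contrariness rules all ground instances $x\sigma$ of those of $T$. For a ground theory $G$ with premises $K_n\cup K_p$, rules $R$ and contrariness rules $C'$: arguments are defined inductively: each $k\in K_n\cup K_p$ is an argument with conclusion $\mathrm{conc}=k$, premises $\mathrm{Prem}=\{k\}$, no rules; if $A_1,\dots,A_m$ are arguments and $r\in R$ is a ground rule with body $\mathrm{conc}(A_1),\dots,\mathrm{conc}(A_m)$ and head $h$, then $A=\langle A_1,\dots,A_m\to h\rangle$ is an argument with $\mathrm{conc}(A)=h$, top rule $\mathrm{top}(A)=r$, $\mathrm{Prem}(A)=\bigcup_i\mathrm{Prem}(A_i)$, $\mathrm{Rules}(A)=\{r\}\cup\bigcup_i\mathrm{Rules}(A_i)$, and subarguments $\mathrm{Sub}(A)=\{A\}\cup\bigcup_i\mathrm{Sub}(A_i)$. The weak points of $A$ are $\mathrm{wp}(A)=(\mathrm{Prem}(A)\cap K_p)\cup\bigcup_{r\in\mathrm{Rules}(A)\cap R_d}\{\mathrm{head}(r),\mathsf{n}(r)\}$. Argument $A$ attacks $A'$ iff there is a ground contrariness rule $s\rightsquigarrow S$ in $C'$ with $s\in\mathrm{wp}(A')$ and $\mathrm{conc}(A)\in S$. $\mathrm{Args}(G)$ and $\mathrm{Att}(G)$ denote the set of arguments and the attack relation. Transformation 1: the Datalog program $P_T$ contains the fact $k.$ for every $k\in K_n\cup K_p$, and for every rule $r\in R_s\cup R_d$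 with body $b_1(\vec X_1),\dots,b_m(\vec X_m)$, head $h(\vec Y)$ and variable list $\vec X$ (all variables of $r$), with a fresh predicate $\mathrm{aux}_r$: the rules $\mathrm{aux}_r(\vec X)\leftarrow b_1(\vec X_1),\dots,b_m(\vec X_m)$ and $h(\vec Y)\leftarrow \mathrm{aux}_r(\vec X)$, and, if $r\in R_d$ with $\mathsf{n}(r)=\nu_r(\vec Z)$, additionally $\nu_r(\vec Z)\leftarrow\mathrm{aux}_r(\vec X)$. Let $M$ be the least Herbrand model of $P_T$. The grounding via Datalog $G_{DL}(T)$ has premises $K_n,K_p$, rules $\{r\sigma : r\in R_s\cup R_d,\ \mathrm{aux}_r(\vec X)\sigma\in M\}$ (strict/defeasible as $r$), and contrariness rules $\{c\sigma: c=(s(\vec X)\rightsquigarrow S(\vec X))\in C,\ s(\vec X)\sigma\in M\}$. Complete, grounded, preferred and stable extensions are those of Dung's abstract argumentation frameworks. *)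

(* Defs.v *)
From Stdlib Require Import List Arith.
Import ListNotations.

Inductive term : Type := TC (c : nat) | TV (v : nat).

Definition atom  : Type := (nat * list term)%type.   (* p(t1,...,tk) *)
Definition gatom : Type := (nat * list nat)%type.

Definition term_vars (t : term) : list nat :=
  match t with TC _ => [] | TV v => [v] end.
Definition term_consts (t : term) : list nat :=
  match t with TC c => [c] | TV _ => [] end.
Definition atom_vars (a : atom) : list nat := concat (map term_vars (snd a)).
Definition atom_consts (a : atom) : list nat := concat (map term_consts (snd a)).
Definition atoms_vars (l : list atom) : list nat := concat (map atom_vars l).
Definition atoms_consts (l : list atom) : list nat := concat (map atom_consts l).

(* strict rule  b1,...,bm -> h *)
Record srule := mkSRule { s_body : list atom; s_head : atom }.
(* defeasible rule  b1,...,bm => h  with name atom n(r) *)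
Record drule := mkDRule { d_body : list atom; d_head : atom; d_name : atom }.
(* contrariness rule  s(X) ~> S(X) *)
Record crule := mkCRule { c_s : atom; c_S : list atom }.

Record theory := mkTheory {
  Kn : list gatom;   (* axioms *)
  Kp : list gatom;   (* ordinary premises *)
  Rs : list srule;
  Rd : list drule;
  Cr : list crule }.

Definition svars (r : srule) : list nat :=
  nodup Nat.eq_dec (atoms_vars (s_body r) ++ atom_vars (s_head r)).
Definition dvars (r : drule) : list nat :=
  nodup Nat.eq_dec (atoms_vars (d_body r) ++ atom_vars (d_head r) ++ atom_vars (d_name r)).
Definition cvars (c : crule) : list nat :=
  nodup Nat.eq_dec (atom_vars (c_s c) ++ atoms_vars (c_S c)).

Definition wf_theory (T : theory) : Prop :=
  (forall r, In r (Rs T) ->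
     forall v, In v (atom_vars (s_head r)) -> In v (atoms_vars (s_body r))) /\
  (forall r, In r (Rd T) ->
     (forall v, In v (atom_vars (d_head r)) -> In v (atoms_vars (d_body r))) /\
     (forall v, In v (atom_vars (d_name r)) -> In v (atoms_vars (d_body r)))) /\
  (forall c, In c (Cr T) ->
     forall v, In v (atoms_vars (c_S c)) -> In v (atom_vars (c_s c))).

Definition HU (T : theory) : list nat :=
  concat (map snd (Kn T)) ++ concat (map snd (Kp T)) ++
  concat (map (fun r => atoms_consts (s_body r) ++ atom_consts (s_head r)) (Rs T)) ++
  concat (map (fun r => atoms_consts (d_body r) ++ atom_consts (d_head r)
                        ++ atom_consts (d_name r)) (Rd T)) ++
  concat (map (fun c => atom_consts (c_s c) ++ atoms_consts (c_S c)) (Cr T)).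

Definition ground_sub_on (U vs : list nat) (sigma : nat -> nat) : Prop :=
  forall v, In v vs -> In (sigma v) U.

Definition inst_term (sigma : nat -> nat) (t : term) : nat :=
  match t with TC c => c | TV v => sigma v end.
Definition inst (sigma : nat -> nat) (a : atom) : gatom :=
  (fst a, map (inst_term sigma) (snd a)).

(* ground rule; gname = None: strict, gname = Some n: defeasible with name n *)
Record grule := mkGRule { gbody : list gatom; ghead : gatom; gname : option gatom }.
Record gcrule := mkGCRule { gc_s : gatom; gc_S : list gatom }.

Record gtheory := mkGTheory {
  gKn : list gatom;
  gKp : list gatom;
  gR  : grule -> Prop;
  gC  : gcrule -> Prop }.

Definition s_inst (sigma : nat -> nat) (r : srule) : grule :=
  mkGRule (map (inst sigma) (s_body r)) (inst sigma (s_head r)) None.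
Definition d_inst (sigma : nat -> nat) (r : drule) : grule :=
  mkGRule (map (inst sigma) (d_body r)) (inst sigma (d_head r))
          (Some (inst sigma (d_name r))).
Definition c_inst (sigma : nat -> nat) (c : crule) : gcrule :=
  mkGCRule (inst sigma (c_s c)) (map (inst sigma) (c_S c)).

Definition full_grounding (T : theory) : gtheory :=
  mkGTheory (Kn T) (Kp T)
    (fun g =>
       (exists r sigma, In r (Rs T) /\ ground_sub_on (HU T) (svars r) sigma /\
                        g = s_inst sigma r) \/
       (exists r sigma, In r (Rd T) /\ ground_sub_on (HU T) (dvars r) sigma /\
                        g = d_inst sigma r))
    (fun g => exists c sigma, In c (Cr T) /\ ground_sub_on (HU T) (cvars c) sigma /\
                              g = c_inst sigma c).

(* Datalog predicates: original ones and fresh aux_r for the i-th strict /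
   i-th defeasible rule *)
Inductive dpred : Type := DP (p : nat) | AuxS (i : nat) | AuxD (i : nat).
Definition datom  : Type := (dpred * list term)%type.
Definition dgatom : Type := (dpred * list nat)%type.
Definition clause : Type := (datom * list datom)%type.   (* head <- body *)

Definition lift (a : atom) : datom := (DP (fst a), snd a).
Definition lift_ground (k : gatom) : datom := (DP (fst k), map TC (snd k)).
Definition dinst (sigma : nat -> nat) (d : datom) : dgatom :=
  (fst d, map (inst_term sigma) (snd d)).

Definition datom_vars (d : datom) : list nat := concat (map term_vars (snd d)).
Definition datom_consts (d : datom) : list nat := concat (map term_consts (snd d)).
Definition clause_vars (c : clause) : list nat :=
  datom_vars (fst c) ++ concat (map datom_vars (snd c)).
Definition clause_consts (c : clause) : list nat :=
  datom_consts (fst c) ++ concat (map datom_consts (snd c)).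

Definition program := list clause.
Definition HU_prog (P : program) : list nat := concat (map clause_consts P).

Inductive lhm (P : program) : dgatom -> Prop :=
| lhm_step : forall (c : clause) (sigma : nat -> nat),
    In c P -> ground_sub_on (HU_prog P) (clause_vars c) sigma ->
    (forall b, In b (snd c) -> lhm P (dinst sigma b)) ->
    lhm P (dinst sigma (fst c)).

Fixpoint mapi_from {A B : Type} (f : nat -> A -> B) (i : nat) (l : list A) : list B :=
  match l with [] => [] | x :: l' => f i x :: mapi_from f (S i) l' end.

Definition aux_s (i : nat) (r : srule) : datom := (AuxS i, map TV (svars r)).
Definition aux_d (i : nat) (r : drule) : datom := (AuxD i, map TV (dvars r)).

Definition s_clauses (i : nat) (r : srule) : list clause :=
  [ (aux_s i r, map lift (s_body r)); (lift (s_head r), [aux_s i r]) ].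
Definition d_clauses (i : nat) (r : drule) : list clause :=
  [ (aux_d i r, map lift (d_body r)); (lift (d_head r), [aux_d i r]);
    (lift (d_name r), [aux_d i r]) ].

Definition PT (T : theory) : program :=
  map (fun k => (lift_ground k, [])) (Kn T ++ Kp T) ++
  concat (mapi_from s_clauses 0 (Rs T)) ++
  concat (mapi_from d_clauses 0 (Rd T)).

Definition dl_grounding (T : theory) : gtheory :=
  mkGTheory (Kn T) (Kp T)
    (fun g =>
       (exists i r sigma, nth_error (Rs T) i = Some r /\
          ground_sub_on (HU T) (svars r) sigma /\
          lhm (PT T) (dinst sigma (aux_s i r)) /\ g = s_inst sigma r) \/
       (exists i r sigma, nth_error (Rd T) i = Some r /\
          ground_sub_on (HU T) (dvars r) sigma /\
          lhm (PT T) (dinst sigma (aux_d i r)) /\ g = d_inst sigma r))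
    (fun g => exists c sigma, In c (Cr T) /\ ground_sub_on (HU T) (cvars c) sigma /\
       lhm (PT T) (dinst sigma (lift (c_s c))) /\ g = c_inst sigma c).

Inductive arg : Type :=
| APrem : gatom -> arg
| ARule : grule -> list arg -> arg.

Definition conc (A : arg) : gatom :=
  match A with APrem k => k | ARule r _ => ghead r end.

Fixpoint prems (A : arg) : list gatom :=
  match A with APrem k => [k] | ARule _ As => concat (map prems As) end.
Fixpoint rules (A : arg) : list grule :=
  match A with APrem _ => [] | ARule r As => r :: concat (map rules As) end.

Inductive is_arg (G : gtheory) : arg -> Prop :=
| is_arg_prem : forall k, In k (gKn G) \/ In k (gKp G) -> is_arg G (APrem k)
| is_arg_rule : forall r As, gR G r -> (forall A, In A As -> is_arg G A) ->
    map conc As = gbody r -> is_arg G (ARule r As).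

Definition wp (G : gtheory) (A : arg) (x : gatom) : Prop :=
  (In x (prems A) /\ In x (gKp G)) \/
  (exists r n, In r (rules A) /\ gname r = Some n /\ (x = ghead r \/ x = n)).

Definition attacks (G : gtheory) (A B : arg) : Prop :=
  exists c, gC G c /\ wp G B (gc_s c) /\ In (conc A) (gc_S c).

Section Dung.
Variable X : Type.
Variable Args : X -> Prop.
Variable Att : X -> X -> Prop.

Definition subset (E F : X -> Prop) : Prop := forall a, E a -> F a.
Definition conflict_free (E : X -> Prop) : Prop :=
  forall a b, E a -> E b -> ~ Att a b.
Definition defends (E : X -> Prop) (a : X) : Prop :=
  forall b, Args b -> Att b a -> exists c, E c /\ Att c b.
Definition admissible (E : X -> Prop) : Prop :=
  subset E Args /\ conflict_free E /\ forall a, E a -> defends E a.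
Definition complete_ext (E : X -> Prop) : Prop :=
  admissible E /\ forall a, Args a -> defends E a -> E a.
Definition char_fixpoint (E : X -> Prop) : Prop :=
  forall a, E a <-> (Args a /\ defends E a).
Definition grounded_ext (E : X -> Prop) : Prop :=
  char_fixpoint E /\ forall F, char_fixpoint F -> subset E F.
Definition preferred_ext (E : X -> Prop) : Prop :=
  admissible E /\ forall F, admissible F -> subset E F -> subset F E.
Definition stable_ext (E : X -> Prop) : Prop :=
  subset E Args /\ conflict_free E /\
  forall a, Args a -> ~ E a -> exists b, E b /\ Att b a.
End Dung.

Inductive semantics : Type := Complete | Grounded | Preferred | Stable.

Definition sem_ext (s : semantics) (G : gtheory) (E : arg -> Prop) : Prop :=
  match s with
  | Complete  => complete_ext arg (is_arg G) (attacks G) E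
  | Grounded  => grounded_ext arg (is_arg G) (attacks G) E
  | Preferred => preferred_ext arg (is_arg G) (attacks G) E
  | Stable    => stable_ext arg (is_arg G) (attacks G) E
  end.

Definition sem_theory (s : semantics) (T : theory) (E : arg -> Prop) : Prop :=
  sem_ext s (full_grounding T) E.

(* Main.v *)
Require Import Defs.
From Stdlib Require Import List Arith Lia.
Import ListNotations.

Section DungEq.
Variable X : Type.
Variables Args1 Args2 : X -> Prop.
Variables Att1 Att2 : X -> X -> Prop.
Hypothesis HA : forall a, Args1 a <-> Args2 a.
Hypothesis HT : forall a b, Args1 b -> (Att1 a b <-> Att2 a b).

Lemma defends_eq E a : Args1 a -> (defends X Args1 Att1 E a <-> defends X Args2 Att2 E a).
Proof.
  intro Ha; unfold defends; split; intros H b Hb Hba.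
  - assert (Hb1 : Args1 b) by (apply HA; exact Hb).
    destruct (H b Hb1) as [c [Ec Hc]]. { apply (HT b a Ha); exact Hba. }
    exists c; split; [exact Ec|]. apply (HT c b Hb1); exact Hc.
  - assert (Hb2 : Args2 b) by (apply HA; exact Hb).
    destruct (H b Hb2) as [c [Ec Hc]]. { apply (HT b a Ha); exact Hba. }
    exists c; split; [exact Ec|]. apply (HT c b Hb); exact Hc.
Qed.

Lemma admissible_eq E : admissible X Args1 Att1 E <-> admissible X Args2 Att2 E.
Proof.
  unfold admissible, subset, conflict_free; split.
  - intros [H1 [H2 H3]]; split; [|split].
    + intros a Ea; apply HA; auto.
    + intros a b Ea Eb Hab; apply (H2 a b Ea Eb); apply (HT a b (H1 b Eb)); exact Hab.
    + intros a Ea; apply (defends_eq E a (H1 a Ea)); auto.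
  - intros [H1 [H2 H3]].
    assert (H1' : forall a, E a -> Args1 a) by (intros a Ea; apply HA; auto).
    split; [|split].
    + exact H1'.
    + intros a b Ea Eb Hab; apply (H2 a b Ea Eb); apply (HT a b (H1' b Eb)); exact Hab.
    + intros a Ea; apply (defends_eq E a (H1' a Ea)); auto.
Qed.

Lemma complete_eq E : complete_ext X Args1 Att1 E <-> complete_ext X Args2 Att2 E.
Proof.
  unfold complete_ext; rewrite admissible_eq; split; intros [H1 H2]; split; auto.
  - intros a Ha Hd. assert (Ha1 : Args1 a) by (apply HA; auto).
    apply H2; [auto|]. apply (defends_eq E a Ha1); auto.
  - intros a Ha Hd. apply H2; [apply HA; auto|]. apply (defends_eq E a Ha); auto.
Qed.

Lemma char_eq E : char_fixpoint X Args1 Att1 E <-> char_fixpoint X Args2 Att2 E.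
Proof.
  unfold char_fixpoint; split; intros H a; split.
  - intro Ea; destruct (proj1 (H a) Ea) as [Ha Hd]; split; [apply HA; auto|].
    apply (defends_eq E a Ha); auto.
  - intros [Ha Hd]; apply H. assert (Ha1 : Args1 a) by (apply HA; auto).
    split; auto. apply (defends_eq E a Ha1); auto.
  - intro Ea; destruct (proj1 (H a) Ea) as [Ha Hd].
    assert (Ha1 : Args1 a) by (apply HA; auto).
    split; auto. apply (defends_eq E a Ha1); auto.
  - intros [Ha Hd]; apply H. split; [apply HA; auto|]. apply (defends_eq E a Ha); auto.
Qed.

Lemma grounded_eq E : grounded_ext X Args1 Att1 E <-> grounded_ext X Args2 Att2 E.
Proof.
  unfold grounded_ext; rewrite char_eq; split; intros [H1 H2]; split; auto;
  intros F HF; apply H2; apply char_eq; auto.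
Qed.

Lemma preferred_eq E : preferred_ext X Args1 Att1 E <-> preferred_ext X Args2 Att2 E.
Proof.
  unfold preferred_ext; rewrite admissible_eq; split; intros [H1 H2]; split; auto;
  intros F HF; apply H2; apply admissible_eq; auto.
Qed.

Lemma stable_eq E : stable_ext X Args1 Att1 E <-> stable_ext X Args2 Att2 E.
Proof.
  unfold stable_ext, subset, conflict_free; split.
  - intros [H1 [H2 H3]]; split; [|split].
    + intros a Ea; apply HA; auto.
    + intros a b Ea Eb Hab; apply (H2 a b Ea Eb); apply (HT a b (H1 b Eb)); exact Hab.
    + intros a Ha NE. assert (Ha1 : Args1 a) by (apply HA; auto).
      destruct (H3 a Ha1 NE) as [b [Eb Hb]]; exists b; split; auto; apply HT; auto.
  - intros [H1 [H2 H3]].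
    assert (H1' : forall a, E a -> Args1 a) by (intros a Ea; apply HA; auto).
    split; [|split].
    + exact H1'.
    + intros a b Ea Eb Hab; apply (H2 a b Ea Eb); apply (HT a b (H1' b Eb)); exact Hab.
    + intros a Ha NE. destruct (H3 a (proj1 (HA a) Ha) NE) as [b [Eb Hb]];
      exists b; split; auto; apply HT; auto.
Qed.
End DungEq.

Definition lift_g (k : gatom) : dgatom := (DP (fst k), snd k).

Lemma in_concat_map {A B} (f : A -> list B) (l : list A) x y :
  In x l -> In y (f x) -> In y (concat (map f l)).
Proof. intros. apply in_concat. exists (f x); split; auto. apply in_map; auto. Qed.

Lemma lhm_consts P (g : dgatom) : lhm P g -> forall c, In c (snd g) -> In c (HU_prog P).
Proof.
  intro H; induction H as [cl sigma Hc Hs Hb IH]; intros c Hin.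
  simpl in Hin. apply in_map_iff in Hin as [t [Ht Hint]].
  destruct t as [c0|v]; simpl in Ht; subst.
  - unfold HU_prog. apply (in_concat_map _ _ cl); auto.
    unfold clause_consts. apply in_or_app; left. unfold datom_consts.
    apply (in_concat_map _ _ (TC c)); simpl; auto.
  - apply Hs. unfold clause_vars. apply in_or_app; left. unfold datom_vars.
    apply (in_concat_map _ _ (TV v)); simpl; auto.
Qed.

Lemma aux_consts P q vs sigma v :
  lhm P (dinst sigma (q, map TV vs)) -> In v vs -> In (sigma v) (HU_prog P).
Proof.
  intros H Hv. apply (lhm_consts _ _ H). simpl. rewrite map_map. simpl.
  apply (in_map (fun x => sigma x)); auto.
Qed.

Lemma datom_vars_TV q vs v : In v (datom_vars (q, map TV vs)) -> In v vs.
Proof.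
  unfold datom_vars; simpl. rewrite in_concat. intros [l [Hl Hv]].
  apply in_map_iff in Hl as [t [Ht Hint]]. apply in_map_iff in Hint as [w [Hw Hin]].
  subst. simpl in Hv. destruct Hv as [->|[]]; auto.
Qed.

Lemma body_var P body sigma v :
  (forall b, In b body -> lhm P (lift_g (inst sigma b))) ->
  In v (atoms_vars body) -> In (sigma v) (HU_prog P).
Proof.
  intros Hb Hv. unfold atoms_vars in Hv. apply in_concat in Hv as [l [Hl Hv]].
  apply in_map_iff in Hl as [b [<- Hbin]]. unfold atom_vars in Hv.
  apply in_concat in Hv as [l [Hl Hv]]. apply in_map_iff in Hl as [t [<- Ht]].
  destruct t as [c|w]; simpl in Hv; [contradiction|]. destruct Hv as [Hw|[]]; subst w.
  apply (lhm_consts _ _ (Hb b Hbin)). simpl. apply (in_map (inst_term sigma) _ (TV v)); auto.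
Qed.

Lemma mapi_nth {A B} (f : nat -> A -> B) l : forall i k x,
  nth_error l i = Some x -> In (f (k + i) x) (mapi_from f k l).
Proof.
  induction l as [|a l IH]; intros i k x H; destruct i; simpl in *; try discriminate.
  - inversion H; subst. left. f_equal. lia.
  - right. replace (k + S i) with (S k + i) by lia. apply IH; auto.
Qed.

Lemma lift_inst_dinst sigma a : dinst sigma (lift a) = lift_g (inst sigma a).
Proof. reflexivity. Qed.

Lemma lift_nodup (l : list nat) sigma : map (inst_term sigma) (map TC l) = l.
Proof. induction l; simpl; f_equal; auto. Qed.

Lemma no_vars_TC (l : list nat) v : ~ In v (concat (map term_vars (map TC l))).
Proof. induction l; simpl; auto. Qed.

Section Main.
Variable T : theory.
Hypothesis HT : wf_theory T.

Lemma fact_lhm k : In k (Kn T) \/ In k (Kp T) -> lhm (PT T) (lift_g k).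
Proof.
  intro Hk.
  assert (E : lift_g k = dinst (fun v => v) (lift_ground k)).
  { unfold lift_g, dinst, lift_ground; simpl. rewrite lift_nodup. reflexivity. }
  rewrite E. apply (lhm_step _ (lift_ground k, [])).
  - unfold PT. apply in_or_app; left. apply (in_map (fun k => (lift_ground k, []))).
    apply in_or_app; auto.
  - intros v Hv. unfold clause_vars in Hv; simpl in Hv. rewrite app_nil_r in Hv.
    exfalso; apply (no_vars_TC _ _ Hv).
  - simpl; tauto.
Qed.

Lemma s_clause_in i r c : nth_error (Rs T) i = Some r -> In c (s_clauses i r) -> In c (PT T).
Proof.
  intros Hn Hc. unfold PT. apply in_or_app; right; apply in_or_app; left.
  apply in_concat. exists (s_clauses i r); split; auto.
  apply (mapi_nth s_clauses _ i 0 r Hn).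
Qed.

Lemma d_clause_in i r c : nth_error (Rd T) i = Some r -> In c (d_clauses i r) -> In c (PT T).
Proof.
  intros Hn Hc. unfold PT. apply in_or_app; right; apply in_or_app; right.
  apply in_concat. exists (d_clauses i r); split; auto.
  apply (mapi_nth d_clauses _ i 0 r Hn).
Qed.

Lemma s_head_lhm i r sigma : nth_error (Rs T) i = Some r ->
  lhm (PT T) (dinst sigma (aux_s i r)) -> lhm (PT T) (lift_g (inst sigma (s_head r))).
Proof.
  intros Hn Ha. rewrite <- lift_inst_dinst.
  apply (lhm_step _ (lift (s_head r), [aux_s i r])).
  - apply (s_clause_in i r); simpl; auto.
  - intros v Hv. unfold clause_vars in Hv; simpl in Hv. rewrite app_nil_r in Hv.
    apply (aux_consts _ (AuxS i) (svars r) sigma v Ha).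
    apply in_app_or in Hv as [Hv|Hv].
    + unfold svars. apply nodup_In. apply in_or_app; right. exact Hv.
    + apply (datom_vars_TV (AuxS i)); exact Hv.
  - simpl. intros b [<-|[]]. exact Ha.
Qed.

Lemma d_head_lhm i r sigma : nth_error (Rd T) i = Some r ->
  lhm (PT T) (dinst sigma (aux_d i r)) ->
  lhm (PT T) (lift_g (inst sigma (d_head r))) /\ lhm (PT T) (lift_g (inst sigma (d_name r))).
Proof.
  intros Hn Ha. split; rewrite <- lift_inst_dinst.
  - apply (lhm_step _ (lift (d_head r), [aux_d i r])).
    + apply (d_clause_in i r); simpl; auto.
    + intros v Hv. unfold clause_vars in Hv; simpl in Hv. rewrite app_nil_r in Hv.
      apply (aux_consts _ (AuxD i) (dvars r) sigma v Ha).
      apply in_app_or in Hv as [Hv|Hv].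
      * unfold dvars. apply nodup_In. apply in_or_app; right. apply in_or_app; left. exact Hv.
      * apply (datom_vars_TV (AuxD i)); exact Hv.
    + simpl. intros b [<-|[]]. exact Ha.
  - apply (lhm_step _ (lift (d_name r), [aux_d i r])).
    + apply (d_clause_in i r); simpl; auto.
    + intros v Hv. unfold clause_vars in Hv; simpl in Hv. rewrite app_nil_r in Hv.
      apply (aux_consts _ (AuxD i) (dvars r) sigma v Ha).
      apply in_app_or in Hv as [Hv|Hv].
      * unfold dvars. apply nodup_In. apply in_or_app; right. apply in_or_app; right. exact Hv.
      * apply (datom_vars_TV (AuxD i)); exact Hv.
    + simpl. intros b [<-|[]]. exact Ha.
Qed.

Lemma s_aux_lhm i r sigma : nth_error (Rs T) i = Some r ->
  (forall b, In b (s_body r) -> lhm (PT T) (lift_g (inst sigma b))) ->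
  lhm (PT T) (dinst sigma (aux_s i r)).
Proof.
  intros Hn Hb. destruct HT as [Hs _].
  pose proof (Hs r (nth_error_In _ _ Hn)) as Hw.
  apply (lhm_step _ (aux_s i r, map lift (s_body r))).
  - apply (s_clause_in i r); simpl; auto.
  - intros v Hv. unfold clause_vars in Hv; simpl in Hv.
    apply (body_var _ (s_body r) sigma v Hb).
    apply in_app_or in Hv as [Hv|Hv].
    + apply datom_vars_TV in Hv. unfold svars in Hv. apply nodup_In in Hv.
      apply in_app_or in Hv as [Hv|Hv]; auto.
    + rewrite map_map in Hv. exact Hv.
  - simpl. intros b Hin. apply in_map_iff in Hin as [a [<- Ha]].
    rewrite lift_inst_dinst. auto.
Qed.

Lemma d_aux_lhm i r sigma : nth_error (Rd T) i = Some r ->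
  (forall b, In b (d_body r) -> lhm (PT T) (lift_g (inst sigma b))) ->
  lhm (PT T) (dinst sigma (aux_d i r)).
Proof.
  intros Hn Hb. destruct HT as [_ [Hd _]].
  destruct (Hd r (nth_error_In _ _ Hn)) as [Hw1 Hw2].
  apply (lhm_step _ (aux_d i r, map lift (d_body r))).
  - apply (d_clause_in i r); simpl; auto.
  - intros v Hv. unfold clause_vars in Hv; simpl in Hv.
    apply (body_var _ (d_body r) sigma v Hb).
    apply in_app_or in Hv as [Hv|Hv].
    + apply datom_vars_TV in Hv. unfold dvars in Hv. apply nodup_In in Hv.
      apply in_app_or in Hv as [Hv|Hv]; auto.
      apply in_app_or in Hv as [Hv|Hv]; auto.
    + rewrite map_map in Hv. exact Hv.
  - simpl. intros b Hin. apply in_map_iff in Hin as [a [<- Ha]].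
    rewrite lift_inst_dinst. auto.
Qed.

Lemma body_from_args (As : list arg) body sigma :
  map conc As = map (inst sigma) body ->
  (forall A, In A As -> lhm (PT T) (lift_g (conc A))) ->
  forall b, In b body -> lhm (PT T) (lift_g (inst sigma b)).
Proof.
  intros Hm HA b Hb.
  assert (Hin : In (inst sigma b) (map conc As)) by (rewrite Hm; apply in_map; auto).
  apply in_map_iff in Hin as [A [HcA HinA]]. rewrite <- HcA. auto.
Qed.

Lemma full_to_dl A : is_arg (full_grounding T) A ->
  is_arg (dl_grounding T) A /\ lhm (PT T) (lift_g (conc A)).
Proof.
  intro H; induction H as [k Hk | r As Hr HAs IH Hm].
  - split; [constructor; auto|]. simpl. apply fact_lhm; auto.
  - assert (IH1 : forall A, In A As -> is_arg (dl_grounding T) A) by (intros; apply IH; auto).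
    assert (IH2 : forall A, In A As -> lhm (PT T) (lift_g (conc A))) by (intros; apply IH; auto).
    destruct Hr as [[rs [sigma [Hin [Hg ->]]]] | [rd [sigma [Hin [Hg ->]]]]];
      simpl in Hm.
    + destruct (In_nth_error _ _ Hin) as [i Hn].
      pose proof (s_aux_lhm i rs sigma Hn (body_from_args As _ sigma Hm IH2)) as Ha.
      split.
      * constructor; auto. left. exists i, rs, sigma; auto.
      * simpl. apply (s_head_lhm i rs sigma Hn Ha).
    + destruct (In_nth_error _ _ Hin) as [i Hn].
      pose proof (d_aux_lhm i rd sigma Hn (body_from_args As _ sigma Hm IH2)) as Ha.
      split.
      * constructor; auto. right. exists i, rd, sigma; auto.
      * simpl. apply (d_head_lhm i rd sigma Hn Ha).
Qed.

Lemma dl_to_full A : is_arg (dl_grounding T) A -> is_arg (full_grounding T) A.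
Proof.
  intro H; induction H as [k Hk | r As Hr HAs IH Hm].
  - constructor; auto.
  - constructor; auto.
    destruct Hr as [[i [rs [sigma [Hn [Hg [_ ->]]]]]] | [i [rd [sigma [Hn [Hg [_ ->]]]]]]].
    + left. exists rs, sigma. split; auto. eapply nth_error_In; eauto.
    + right. exists rd, sigma. split; auto. eapply nth_error_In; eauto.
Qed.

Lemma valid_prems G A : is_arg G A -> forall k, In k (prems A) -> In k (gKn G) \/ In k (gKp G).
Proof.
  intro H; induction H as [k0 Hk | r As Hr HAs IH Hm]; intros k Hk'.
  - simpl in Hk'. destruct Hk' as [<-|[]]; auto.
  - simpl in Hk'. apply in_concat in Hk' as [l [Hl Hk']].
    apply in_map_iff in Hl as [B [<- HB]]. eapply IH; eauto.
Qed.

Lemma valid_rules G A : is_arg G A -> forall r, In r (rules A) -> gR G r.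
Proof.
  intro H; induction H as [k0 Hk | r0 As Hr HAs IH Hm]; intros r Hr'.
  - simpl in Hr'. contradiction.
  - simpl in Hr'. destruct Hr' as [<-|Hr']; auto.
    apply in_concat in Hr' as [l [Hl Hr']].
    apply in_map_iff in Hl as [B [<- HB]]. eapply IH; eauto.
Qed.

Lemma wp_lhm B x : is_arg (dl_grounding T) B -> wp (dl_grounding T) B x -> lhm (PT T) (lift_g x).
Proof.
  intros HB [[Hx HKp] | [r [n [Hr [Hn Hx]]]]].
  - apply fact_lhm; auto.
  - pose proof (valid_rules _ _ HB r Hr) as Hg.
    destruct Hg as [[i [rs [sigma [_ [_ [_ ->]]]]]] | [i [rd [sigma [Hni [_ [Ha ->]]]]]]].
    + simpl in Hn; discriminate.
    + simpl in Hn. inversion Hn; subst n.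
      destruct (d_head_lhm i rd sigma Hni Ha) as [H1 H2].
      destruct Hx as [->| ->]; auto.
Qed.

Lemma attacks_eq A B : is_arg (full_grounding T) B ->
  (attacks (full_grounding T) A B <-> attacks (dl_grounding T) A B).
Proof.
  intro HB. pose proof (proj1 (full_to_dl B HB)) as HB'. split.
  - intros [c [[cr [sigma [Hin [Hg ->]]]] [Hw Hc]]].
    exists (c_inst sigma cr). split; [|split; auto].
    exists cr, sigma. repeat split; auto.
    rewrite lift_inst_dinst. apply (wp_lhm B); auto.
  - intros [c [[cr [sigma [Hin [Hg [_ ->]]]]] [Hw Hc]]].
    exists (c_inst sigma cr). split; [|split; auto].
    exists cr, sigma. repeat split; auto.
Qed.
End Main.

Theorem theorem1 (T : theory) (HT : wf_theory T) (s : semantics) :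
  (forall E : arg -> Prop, sem_theory s T E <-> sem_ext s (full_grounding T) E) /\
  (forall E : arg -> Prop, sem_ext s (full_grounding T) E <-> sem_ext s (dl_grounding T) E).
Proof.
  split; [intro E; unfold sem_theory; tauto|].
  intro E.
  assert (HA : forall a, is_arg (full_grounding T) a <-> is_arg (dl_grounding T) a).
  { intro a; split; [intro H; apply (full_to_dl T HT a H) | apply dl_to_full]. }
  assert (HAt : forall a b, is_arg (full_grounding T) b ->
    (attacks (full_grounding T) a b <-> attacks (dl_grounding T) a b)).
  { intros a b Hb; apply (attacks_eq T HT a b Hb). }
  destruct s; simpl.
  - apply (complete_eq arg _ _ _ _ HA HAt).
  - apply (grounded_eq arg _ _ _ _ HA HAt).
  - apply (preferred_eq arg _ _ _ _ HA HAt).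
  - apply (stable_eq arg _ _ _ _ HA HAt).
Qed.
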